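(* Let $\Sigma$ be a $(\lambda,\beta)$-set system on a finite set $V$. For every $S\in\Sigma$ with $|S|\ge 1/(\lambda-\lambda^2)$ and every $t\in S$, there exists a $t$-bound set $S'\in\Sigma$ with $\lambda^2|S|\le|S'|\le\lambda|S|$.
   Context: A set containing vertex $t$ is called $t$-bound. For $0<\lambda<1$, $\beta>1$, a collection $\Sigma$ of subsets of a finite set $V$ is a $(\lambda,\beta)$-set system if: (K1) $V\in\Sigma$; (K2) if $S\in\Sigma$ has $|S|>1$, then for every $t\in S$ there is a $t$-bound $S'\in\Sigma$ with $S'\subset S$ and $|S'|\ge\min\{\lambda|S|,|S|-1\}$; (K3) for every $v\in V$ and $L\ge2$, the union of all sets in $\Sigma$ containing $v$ of size at most $L$ has at most $\beta L$ elements. *)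

(* Defs.v *)
From mathcomp Require Import all_boot all_order all_algebra.
Set Implicit Arguments. Unset Strict Implicit. Unset Printing Implicit Defensive.
Import Order.TTheory GRing.Theory Num.Theory.
Local Open Scope ring_scope.

Definition set_system_K1 (V : finType) (Sigma : {set {set V}}) : Prop :=
  [set: V] \in Sigma.

Definition set_system_K2 (R : realFieldType) (V : finType) (lam : R)
    (Sigma : {set {set V}}) : Prop :=
  forall S : {set V}, S \in Sigma -> (1 < #|S|)%N ->
    forall t : V, t \in S ->
      exists S' : {set V}, [/\ S' \in Sigma, t \in S', S' \proper S &
        Num.min (lam * (#|S|)%:R) ((#|S|)%:R - 1) <= (#|S'|)%:R].

Definition set_system_K3 (R : realFieldType) (V : finType) (beta : R)
    (Sigma : {set {set V}}) : Prop :=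
  forall (v : V) (L : R), 2 <= L ->
    (#|\bigcup_(S in Sigma | (v \in S) && ((#|S|)%:R <= L)) S|)%:R <= beta * L.

Definition lambda_beta_set_system (R : realFieldType) (V : finType)
    (lam beta : R) (Sigma : {set {set V}}) : Prop :=
  [/\ (0 < lam) && (lam < 1), 1 < beta,
      set_system_K1 Sigma, set_system_K2 lam Sigma & set_system_K3 beta Sigma].

(* Main.v *)
Require Import Defs.
From mathcomp Require Import all_boot all_order all_algebra.
From mathcomp Require Import ring lra.
Import Order.TTheory GRing.Theory Num.Theory.
Local Open Scope ring_scope.

Theorem proposition5 (R : realFieldType) (V : finType) (lam beta : R)
    (Sigma : {set {set V}}) :
  lambda_beta_set_system lam beta Sigma ->
  forall S : {set V}, S \in Sigma ->
    1 / (lam - lam ^+ 2) <= (#|S|)%:R ->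
    forall t : V, t \in S ->
      exists S' : {set V}, [/\ S' \in Sigma, t \in S',
        lam ^+ 2 * (#|S|)%:R <= (#|S'|)%:R &
        (#|S'|)%:R <= lam * (#|S|)%:R].
Proof.
move=> [/andP[l0 l1] _ _ K2 _] S SS hn t tS.
set n : R := (#|S|)%:R in hn *.
have pd : 0 < lam - lam ^+ 2 by rewrite expr2; nra.
have key : 1 <= n * (lam - lam ^+ 2).
  have := ler_pM2r pd; move=> e; rewrite -e in hn.
  by rewrite mul1r mulVf ?gt_eqF in hn.
have n0 : 0 <= n by rewrite /n ler0n.
have key2 : lam ^+ 2 * n + 1 <= lam * n by rewrite expr2 in key *; nra.
have l2n : 0 <= lam ^+ 2 * n by rewrite expr2; nra.
suff H : forall k (T : {set V}), (#|T| <= k)%N -> T \in Sigma -> t \in T ->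
  lam * n < (#|T|)%:R ->
  exists S' : {set V}, [/\ S' \in Sigma, t \in S',
        lam ^+ 2 * n <= (#|S'|)%:R & (#|S'|)%:R <= lam * n].
  apply: (H #|S| S) => //; rewrite /n -subr_gt0.
  have -> : n - lam * n = n * (1 - lam) by ring.
  have : 0 < n by nra.
  move=> np; apply: mulr_gt0 => //; lra.
elim=> [|k IH] T hk TS tT hT.
  have : #|T| = 0%N by apply/eqP; rewrite -leqn0.
  move=> e; rewrite e in hT; lra.
have T1 : (1 < #|T|)%N.
  rewrite -(ltr_nat R); lra.
have [T' [T'S tT' pT' hmin]] := K2 T TS T1 t tT.
have lt : (#|T'| < #|T|)%N by exact: proper_card.
case: (lerP (#|T'|)%:R (lam * n)) => h.
  exists T'; split => //.
  have h1 : lam ^+ 2 * n <= lam * (#|T|)%:R.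
    rewrite expr2 -mulrA; apply: ler_wpM2l; lra.
  have h2 : lam ^+ 2 * n <= (#|T|)%:R - 1 by lra.
  apply: le_trans hmin.
  by rewrite le_min h1 h2.
apply: (IH T') => //.
by rewrite -ltnS; apply: leq_trans lt hk.
Qed.
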